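(* Let $(X,T,Y)$, $\psi$, $\mathcal G=\{g_\theta:\theta\in\Theta\}$ and $L$ be as described in the context, with $\psi$ satisfying Assumption 1, and suppose the policy class is correctly specified for the surrogate loss, i.e. $$\mathcal G\cap\Big(\operatorname*{argmin}_{g\ \text{unconstrained}}\mathbb E\big[|\psi|\, l(g(X),\operatorname{sign}(\psi))\big]\Big)\neq\varnothing,$$ where the argmin ranges over all measurable $g:\mathcal X\to\mathbb R$. Define $$m(X;\theta)=\mathbb E\big[|\psi|\, l'(g_\theta(X),\operatorname{sign}(\psi))\mid X\big].$$ Then for $\theta^*\in\Theta$, $$\theta^*\in\operatorname*{argmin}_{\theta\in\Theta}L(\theta)\iff m(X;\theta^* )=0\ \text{almost surely}.$$
   Context: $X$ is a context taking values in a space $\mathcal X$, $T\in\{-1,1\}$ is a treatment, $Y\in\mathbb R$ is an outcome, and $Y(-1),Y(1)$ are potential outcomes with $Y=Y(T)$ and $Y(t)\perp T\mid X$ for each $t$. A score variable $\psi$ is a real-valued random variable depending on observables. Assumption 1: $\mathbb E[\psi\mid X]=\mathbb E[Y(1)-Y(-1)\mid X]$ almost surely and $\mathbb E[|\psi|]<\infty$. $\Theta\subseteq\mathbb R^d$ and each $g_\theta:\mathcal X\to\mathbb R$ is measurable. The logistic surrogate loss is $l(g,s)=2\log(1+\exp(g))-(s+1)g$ for $g\in\mathbb R$, $s\in\{-1,1\}$, with derivative in $g$ given by $l'(g,s)=2\sigma(g)-(s+1)$, where $\sigma(g)=\exp(g)/(1+\exp(g))$. The population surrogate risk is $L(\theta)=\mathbb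 E[|\psi|\, l(g_\theta(X),\operatorname{sign}(\psi))]$. *)

(* Defs.v *)
From HB Require Import structures.
From mathcomp Require Import all_boot all_order all_algebra.
From mathcomp Require Import all_classical all_reals all_analysis.
Set Implicit Arguments. Unset Strict Implicit. Unset Printing Implicit Defensive.
Import Order.TTheory GRing.Theory Num.Theory.
Import numFieldNormedType.Exports.
Local Open Scope classical_set_scope.
Local Open Scope ring_scope.

Section Defs.
Variable R : realType.

(* sign with values in {-1,1}; the convention at 0 is irrelevant since it is
   always multiplied by |psi| = 0 there. *)
Definition sgn (x : R) : R := if x < 0 then -1 else 1.

Definition sigmoid (g : R) : R := expR g / (1 + expR g).

Definition lloss (g s : R) : R := 2 * ln (1 + expR g) - (s + 1) * g.
Definition lloss' (g s : R) : R := 2 * sigmoid g - (s + 1).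
End Defs.

Section CondExp.
Context {dO dX : measure_display} {R : realType}
  {Omega : measurableType dO} {XX : measurableType dX}.

(* h : XX -> R is a version of E[Z | X], i.e. h(X) is a version of the
   conditional expectation of Z given sigma(X). *)
Definition is_cond_exp (P : probability Omega R) (X : Omega -> XX)
    (Z : Omega -> R) (h : XX -> R) : Prop :=
  [/\ measurable_fun setT h,
      P.-integrable setT (EFin \o Z),
      P.-integrable setT (EFin \o (h \o X)) &
      forall B : set XX, measurable B ->
        (\int[P]_(w in X @^-1` B) (Z w)%:E =
         \int[P]_(w in X @^-1` B) (h (X w))%:E)%E ].

Definition cond_indep (P : probability Omega R) (X : Omega -> XX)
    (U V : Omega -> R) : Prop :=
  forall A B : set R, measurable A -> measurable B ->
    exists hU hV hUV : XX -> R,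
      [/\ is_cond_exp P X (\1_(U @^-1` A) : Omega -> R) hU,
          is_cond_exp P X (\1_(V @^-1` B) : Omega -> R) hV,
          is_cond_exp P X (\1_(U @^-1` A `&` V @^-1` B) : Omega -> R) hUV &
          {ae P, forall w, hUV (X w) = hU (X w) * hV (X w)} ].
End CondExp.

Section Risk.
Context {dO dX : measure_display} {R : realType}
  {Omega : measurableType dO} {XX : measurableType dX}.

Definition surrogate_risk (P : probability Omega R) (X : Omega -> XX)
    (psi : Omega -> R) (h : XX -> R) : \bar R :=
  (\int[P]_w (`|psi w| * lloss (h (X w)) (sgn (psi w)))%:E)%E.
End Risk.

(* Main.v *)
Require Import Defs.
From HB Require Import structures.
From mathcomp Require Import all_boot all_order all_algebra.
From mathcomp Require Import all_classical all_reals all_analysis.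
From mathcomp Require Import ring lra measurable_realfun.
Import Order.TTheory GRing.Theory Num.Theory.
Import numFieldNormedType.Exports.
Local Open Scope classical_set_scope.
Local Open Scope ring_scope.

Section Real.
Variable R : realType.
Implicit Types g t s x : R.

Lemma sgn_cases x : sgn x = 1 \/ sgn x = -1.
Proof. rewrite /sgn; case: ifP; auto. Qed.

Lemma sigmoid_ge0 g : 0 <= sigmoid g.
Proof. rewrite /sigmoid divr_ge0 // ?addr_ge0 // ?expR_ge0 //. Qed.

Lemma sigmoid_lt1 g : sigmoid g < 1.
Proof.
rewrite /sigmoid ltr_pdivrMr ?mul1r; last by rewrite addr_gt0 // expR_gt0.
by rewrite ltrDr.
Qed.

Lemma lloss_ge0 g s : (s = 1 \/ s = -1) -> 0 <= lloss g s.
Proof.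
have h1 : 0 < 1 + expR g by rewrite addr_gt0 // expR_gt0.
rewrite /lloss; case=> ->.
- have : g <= ln (1 + expR g).
    rewrite -{1}(expRK g) ler_ln ?posrE ?expR_gt0 //.
    by rewrite lerDr.
  lra.
- have : 0 <= ln (1 + expR g) by rewrite ln_ge0 // lerDl expR_ge0.
  lra.
Qed.

Lemma lloss'_bound g s : (s = 1 \/ s = -1) -> `|lloss' g s| <= 2.
Proof.
move=> hs; have h0 := sigmoid_ge0 g; have h1 := sigmoid_lt1 g.
rewrite /lloss'; case: hs => ->; rewrite ler_norml; apply/andP; split; lra.
Qed.

Lemma expR_quad t : t <= 1/2 -> expR t <= 1 + t + 2 * t ^+ 2.
Proof.
move=> ht.
have h1 := expR_ge1Dx (- t).
have hp : 0 < expR t by apply: expR_gt0.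
have e : expR t * expR (- t) = 1 by rewrite -expRD subrr expR0.
have h2 : expR t * (1 - t) <= expR t * expR (- t).
  by apply: ler_wpM2l; [exact: expR_ge0 | lra].
rewrite e in h2.
have h3 : 1 <= (1 + t + 2 * t ^+ 2) * (1 - t).
  have h0 : 0 <= 1 - 2 * t by lra.
  have : 0 <= t ^+ 2 * (1 - 2 * t) by apply: mulr_ge0 => //; apply: sqr_ge0.
  move=> h; nra.
nra.
Qed.

Lemma lloss_quad g t s : `|t| <= 1/2 ->
  lloss (g + t) s <= lloss g s + t * lloss' g s + 4 * t ^+ 2.
Proof.
rewrite ler_norml => /andP [ht1 ht2].
set S := sigmoid g.
have hS0 : 0 <= S := sigmoid_ge0 g. have hS1 : S < 1 := sigmoid_lt1 g.
have hp : 0 < 1 + expR g by rewrite addr_gt0 // expR_gt0.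
have hq : 0 < 1 + expR (g + t) by rewrite addr_gt0 // expR_gt0.
have hdiv : (1 + expR (g + t)) / (1 + expR g) = 1 + S * (expR t - 1).
  rewrite /S /sigmoid expRD; field; apply/eqP; lra.
have het := @expR_quad t ht2.
have het0 := expR_gt0 t.
have hln : ln (1 + expR (g + t)) - ln (1 + expR g) <= S * (expR t - 1).
  rewrite -ln_div ?posrE // hdiv le_ln1Dx //.
  have : - S <= S * (expR t - 1) by nra.
  lra.
have hT2 : S * (expR t - 1) <= S * (t + 2 * t ^+ 2).
  apply: ler_wpM2l => //; lra.
have : S * (2 * t ^+ 2) <= 2 * t ^+ 2.
  have hsq : 0 <= t ^+ 2 := sqr_ge0 t. nra.
move=> hT3.
rewrite /lloss /lloss' -/S. nra.
Qed.
Lemma msgn : measurable_fun setT (@sgn R).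
Proof.
rewrite /sgn; apply: measurable_fun_ifT; last 2 first.
- exact: measurable_cst.
- exact: measurable_cst.
- exact: (@measurable_fun_ltr _ R R setT id (cst 0) (@measurable_id _ R setT) (measurable_cst _)).
Qed.
Lemma sigmoid_lt (a b : R) : a < b -> sigmoid a < sigmoid b.
Proof.
move=> ab.
have ha : 0 < 1 + expR a by rewrite addr_gt0 // expR_gt0.
have hb : 0 < 1 + expR b by rewrite addr_gt0 // expR_gt0.
have -> : sigmoid b = sigmoid a + (expR b - expR a) / ((1 + expR a) * (1 + expR b)).
  rewrite /sigmoid; field; apply/andP; split; apply/eqP; lra.
rewrite ltrDl divr_gt0 ?mulr_gt0 // subr_gt0 ltr_expR //.
Qed.

Lemma msigmoid : measurable_fun setT (@sigmoid R).
Proof.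
apply: continuous_measurable_fun => x.
rewrite /sigmoid.
apply: (@continuousM _ _ expR (fun x => (1 + expR x)^-1)).
  exact: continuous_expR.
apply: (@continuousV _ _ (fun x => 1 + expR x)).
  by rewrite gt_eqF // addr_gt0 // expR_gt0.
apply: continuousD; [exact: cst_continuous | exact: continuous_expR].
Qed.
End Real.

Lemma foc_real (R : realType) (c j : R) : 0 <= c ->
  (forall t : R, `|t| <= 1/2 -> 0 <= t * j + 4 * t ^+ 2 * c) -> j = 0.
Proof.
move=> c0 H.
set D := 16 * c + 4 * `|j| + 2.
have D0 : 0 < D by rewrite /D; have := normr_ge0 j; lra.
set e := D^-1.
have e0 : 0 < e by rewrite invr_gt0.
have eD : e * D = 1 by rewrite mulVf // gt_eqF.
have hj := normr_ge0 j.
have h1 : 8 * e * c <= 1/2.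
  have : e * (16 * c) <= e * D by rewrite ler_pM2l //; rewrite /D; lra.
  rewrite eD; lra.
have h2 : e * `|j| <= 1/4.
  have : e * (4 * `|j|) <= e * D by rewrite ler_pM2l //; rewrite /D; lra.
  rewrite eD; lra.
have ht : `|- j * e| <= 1/2.
  rewrite normrM normrN (gtr0_norm e0); lra.
have := H _ ht.
have -> : - j * e * j + 4 * (- j * e) ^+ 2 * c = j ^+ 2 * e * (4 * e * c - 1).
  by ring.
move=> h.
have hj2 : 0 <= j ^+ 2 * e by apply: mulr_ge0; [apply: sqr_ge0 | apply: ltW].
have : j ^+ 2 * e <= 0 by nra.
move=> h3.
have : j ^+ 2 = 0.
  have h4 : j ^+ 2 * e = 0 by apply/eqP; rewrite eq_le h3 hj2.
  by move/eqP: h4; rewrite mulf_eq0 (gt_eqF e0) orbF => /eqP.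
by move/eqP; rewrite sqrf_eq0 => /eqP.
Qed.

Section Meas.

Context {dO dX : measure_display} {R : realType}
  {Omega : measurableType dO} {XX : measurableType dX}.
Variables (P : probability Omega R) (X : Omega -> XX) (psi : Omega -> R).
Hypothesis mX : measurable_fun setT X.
Hypothesis mpsi : measurable_fun setT psi.
Hypothesis ipsi : P.-integrable setT (EFin \o (fun w => `|psi w|)).

Definition Lf (k : XX -> R) w := (`|psi w| * lloss (k (X w)) (sgn (psi w)))%R.
Definition Zf (k : XX -> R) w := (`|psi w| * lloss' (k (X w)) (sgn (psi w)))%R.

Lemma mabspsi : measurable_fun setT (fun w => `|psi w|)%R.
Proof. exact: measurableT_comp (@normr_measurable _ _) mpsi. Qed.

Lemma msgnpsi : measurable_fun setT (fun w => sgn (psi w)).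
Proof. exact: measurableT_comp (@msgn R) mpsi. Qed.

Lemma mkX (k : XX -> R) : measurable_fun setT k -> measurable_fun setT (fun w => k (X w)).
Proof. by move=> mk; exact: measurableT_comp mk mX. Qed.

Lemma mcomp (f : R -> R) (h : Omega -> R) : measurable_fun setT f ->
  measurable_fun setT h -> measurable_fun setT (fun w => f (h w)).
Proof. by move=> mf mh; exact: measurableT_comp mf mh. Qed.

Lemma mLf k : measurable_fun setT k -> measurable_fun setT (Lf k).
Proof.
move=> mk; rewrite /Lf /lloss.
apply: measurable_funM; first exact: mabspsi.
apply: measurable_funB.
  apply: measurable_funM; first exact: measurable_cst.
  apply: mcomp; first exact: measurable_ln.
  apply: measurable_funD; first exact: measurable_cst.
  apply: mcomp. exact: measurable_expR. exact: mkX.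
apply: measurable_funM; last exact: mkX.
apply: measurable_funD; [exact: msgnpsi | exact: measurable_cst].
Qed.

Lemma mZf k : measurable_fun setT k -> measurable_fun setT (Zf k).
Proof.
move=> mk; rewrite /Zf /lloss'.
apply: measurable_funM; first exact: mabspsi.
apply: measurable_funB.
  apply: measurable_funM; first exact: measurable_cst.
  exact: mcomp (@msigmoid R) (@mkX k mk).
apply: measurable_funD; [exact: msgnpsi | exact: measurable_cst].
Qed.

Lemma Lf_ge0 k w : (0 <= Lf k w)%R.
Proof. by rewrite /Lf mulr_ge0 // lloss_ge0 //; exact: sgn_cases. Qed.

Lemma iZf k : measurable_fun setT k -> P.-integrable setT (EFin \o Zf k).
Proof.
move=> mk; apply: (le_integrable measurableT _ _ (integrableZl measurableT 2%R ipsi)).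
  exact/measurable_EFinP/mZf.
move=> w _ /=; rewrite !lee_fin normrM normr_id.
rewrite normrM normr_id (@ger0_norm _ 2) //.
by rewrite mulrC ler_wpM2r //; apply: lloss'_bound; exact: sgn_cases.
Qed.


Lemma int_fin (f : Omega -> R) : P.-integrable setT (EFin \o f) ->
  (\int[P]_w (f w)%:E)%E \is a fin_num.
Proof.
move=> /integrableP [mf fi]; rewrite -integral_fin_num_abs //.
exact/measurable_EFinP.
Qed.

Let c := fine (\int[P]_w (`|psi w|)%:E)%E.
Lemma cE : (\int[P]_w (`|psi w|)%:E)%E = c%:E.
Proof. by rewrite /c fineK //; exact: int_fin. Qed.
Lemma c_ge0 : 0 <= c.
Proof. by rewrite /c fine_ge0 // integral_ge0 // => w _; rewrite lee_fin. Qed.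

Lemma risk0 : surrogate_risk P X psi (fun _ => 0) = ((2 * ln 2) * c)%:E.
Proof.
rewrite /surrogate_risk.
transitivity (\int[P]_w ((2 * ln 2)%:E * (`|psi w|)%:E))%E.
  apply: eq_integral => w _; rewrite -EFinM mulrC /lloss expR0 mulr0 subr0.
  by rewrite (_ : 1 + 1 = 2 :> R).
by rewrite integralZl // cE -EFinM.
Qed.

Lemma risk_ge0 h : (0 <= surrogate_risk P X psi h)%E.
Proof. by apply: integral_ge0 => w _; rewrite lee_fin; exact: Lf_ge0. Qed.

Lemma foc k : measurable_fun setT k ->
  (forall h, measurable_fun setT h ->
     (surrogate_risk P X psi k <= surrogate_risk P X psi h)%E) ->
  forall B, measurable B ->
  (\int[P]_(w in X @^-1` B) (Zf k w)%:E = 0)%E.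
Proof.
move=> mk kmin B mB.
have rfin : surrogate_risk P X psi k \is a fin_num.
  rewrite ge0_fin_numE ?risk_ge0 //.
  have := kmin (fun _ => 0%R) (measurable_cst _).
  by rewrite risk0 => /le_lt_trans; apply; rewrite ltry.
set r := fine (surrogate_risk P X psi k).
have rE : surrogate_risk P X psi k = r%:E by rewrite /r fineK.
have iL : P.-integrable setT (EFin \o Lf k).
  apply/integrableP; split; first exact/measurable_EFinP/mLf.
  have -> : (\int[P]_x `|(EFin \o Lf k) x|)%E = surrogate_risk P X psi k.
    by apply: eq_integral => w _ /=; rewrite ger0_norm ?Lf_ge0.
  by rewrite rE ltry.
have mIB : measurable_fun setT (fun w => \1_B (X w) : R).
  apply: (measurableT_comp _ mX); exact: measurable_indic.
pose G w := (\1_B (X w) * Zf k w)%R.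
have iG : P.-integrable setT (EFin \o G).
  apply: (le_integrable measurableT _ _ (@iZf k mk)).
    exact/measurable_EFinP/measurable_funM/mZf.
  move=> w _ /=; rewrite lee_fin /G normrM indicE.
  by case: (_ \in _); rewrite ?normr1 ?mul1r ?normr0 ?mul0r.
have JE : (\int[P]_(w in X @^-1` B) (Zf k w)%:E)%E = (\int[P]_w (G w)%:E)%E.
  rewrite integral_mkcond; apply: eq_integral => w _.
  rewrite patchE /G indicE.
  have -> : (X w \in B) = (w \in X @^-1` B) by [].
  by case: (w \in _); rewrite ?mul1r ?mul0r.
have jfin : (\int[P]_w (G w)%:E)%E \is a fin_num by exact: int_fin.
set j := fine (\int[P]_w (G w)%:E)%E.
have jE : (\int[P]_w (G w)%:E)%E = j%:E by rewrite /j fineK.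
rewrite JE jE; congr (_%:E).
apply: (@foc_real _ c j c_ge0) => t ht.
pose ht_ x := (k x + t * \1_B x)%R.
have mht : measurable_fun setT ht_.
  apply: measurable_funD => //; apply: measurable_funM; first exact: measurable_cst.
  exact: measurable_indic.
have := kmin _ mht.
have step : (surrogate_risk P X psi ht_ <=
   \int[P]_w ((Lf k w)%:E + ((t%:E * (G w)%:E) + ((4 * t ^+ 2)%:E * (`|psi w|)%:E))))%E.
  apply: ge0_le_integral => //.
  - by move=> w _; rewrite lee_fin; exact: Lf_ge0.
  - exact/measurable_EFinP/mLf.
  - apply/measurable_EFinP.
    rewrite (_ : (fun x => _) = (fun w => Lf k w + (t * G w + 4 * t ^+ 2 * `|psi w|))%R).
      apply: measurable_funD; first exact: mLf.
      apply: measurable_funD; (apply: measurable_funM; first exact: measurable_cst).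
        by rewrite /G; apply: measurable_funM => //; exact: mZf.
      exact: mabspsi.
    by [].
  - move=> w _; rewrite -!EFinM -!EFinD lee_fin /Lf /G /ht_.
    set t1 := (t * \1_B (X w))%R.
    have ht1 : `|t1| <= 1/2.
      rewrite /t1 normrM indicE; case: (_ \in _);
        by rewrite ?normr1 ?mulr1 ?normr0 ?mulr0.
    have ht2 : t1 ^+ 2 <= t ^+ 2.
      rewrite /t1 exprMn indicE; case: (_ \in _);
        by rewrite ?expr1n ?mulr1 ?expr0n ?mulr0 ?sqr_ge0.
    have hq := @lloss_quad _ (k (X w)) t1 (sgn (psi w)) ht1.
    have hp := normr_ge0 (psi w).
    have e1 : (t * (\1_B (X w) * (`|psi w| * lloss' (k (X w)) (sgn (psi w)))))%R
        = (`|psi w| * (t1 * lloss' (k (X w)) (sgn (psi w))))%R.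
      by rewrite /t1; ring.
    rewrite /Zf e1.
    set a := lloss (k (X w) + t1) (sgn (psi w)) in hq *.
    set b := lloss (k (X w)) (sgn (psi w)) in hq *.
    set l1 := lloss' (k (X w)) (sgn (psi w)) in hq *.
    have : (`|psi w| * a <= `|psi w| * (b + t1 * l1 + 4 * t ^+ 2))%R.
      by apply: ler_wpM2l => //; lra.
    nra.
have eqF : (\int[P]_w ((Lf k w)%:E + ((t%:E * (G w)%:E) +
     ((4 * t ^+ 2)%:E * (`|psi w|)%:E))))%E = (r + (t * j + 4 * t ^+ 2 * c))%:E.
  have iT : P.-integrable setT (fun w => (t%:E * (G w)%:E) +
     ((4 * t ^+ 2)%:E * (`|psi w|)%:E))%E.
    by apply: (integrableD measurableT); exact: integrableZl.
  rewrite (integralD measurableT iL iT).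
  rewrite integralD //; [|exact: integrableZl|exact: integrableZl].
  rewrite integralZl // integralZl // cE jE.
  rewrite -[X in (X + _)%E]/(surrogate_risk P X psi k) rE.
  by rewrite -!EFinM -!EFinD.
rewrite eqF in step; rewrite rE => h1.
have := le_trans h1 step; rewrite lee_fin; lra.
Qed.


Lemma mpre B : measurable B -> measurable (X @^-1` B).
Proof. by move=> mB; rewrite -[X @^-1` B]setTI; exact: mX. Qed.

Lemma half k1 k2 : measurable_fun setT k1 -> measurable_fun setT k2 ->
  (forall B, measurable B -> (\int[P]_(w in X @^-1` B) (Zf k1 w)%:E = 0)%E) ->
  (forall B, measurable B -> (\int[P]_(w in X @^-1` B) (Zf k2 w)%:E = 0)%E) ->
  {ae P, forall w, k2 (X w) < k1 (X w) -> psi w = 0}.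
Proof.
move=> mk1 mk2 F1 F2.
pose Bp := [set x | k2 x < k1 x].
have mBp : measurable Bp.
  have := @measurable_lte _ _ R setT measurableT (EFin \o k2) (EFin \o k1).
  rewrite setTI /=; move=> h.
  have -> : Bp = [set x | ((k2 x)%:E < (k1 x)%:E)%E].
    by apply/funext => x; rewrite /Bp /= lte_fin.
  by apply: h; apply/measurable_EFinP.
pose D2 w := (Zf k1 w - Zf k2 w)%R.
have mD : measurable (X @^-1` Bp) by exact: mpre.
have i1 : P.-integrable (X @^-1` Bp) (EFin \o Zf k1).
  exact: (integrableS measurableT mD (@subsetT _ _) (@iZf k1 mk1)).
have i2 : P.-integrable (X @^-1` Bp) (EFin \o Zf k2).
  exact: (integrableS measurableT mD (@subsetT _ _) (@iZf k2 mk2)).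
have I0 : (\int[P]_(w in X @^-1` Bp) (D2 w)%:E = 0)%E.
  have := integralB mD i1 i2.
  rewrite F1 // F2 // subee // => <-.
have D2pos : forall w, (X @^-1` Bp) w -> (0 <= D2 w)%R.
  move=> w /= hw; rewrite /D2 /Zf /lloss'.
  have := @sigmoid_lt R _ _ hw; have := normr_ge0 (psi w).
  move=> h1 h2.
  have -> : (`|psi w| * (2 * sigmoid (k1 (X w)) - (sgn (psi w) + 1)) -
     `|psi w| * (2 * sigmoid (k2 (X w)) - (sgn (psi w) + 1)) =
     2 * (`|psi w| * (sigmoid (k1 (X w)) - sigmoid (k2 (X w)))))%R by ring.
  rewrite mulr_ge0 // mulr_ge0 // subr_ge0; exact: ltW.
have mD2 : measurable_fun (X @^-1` Bp) (EFin \o D2).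
  apply: (measurable_funS measurableT (@subsetT _ _)).
  apply/measurable_EFinP; apply: measurable_funB; exact: mZf.
have := (ae_eq_integral_abs P mD mD2).1.
have -> : (\int[P]_(x in X @^-1` Bp) `|(EFin \o D2) x|)%E = 0%E.
  rewrite -I0; apply: eq_integral => w hw /=.
  by rewrite ger0_norm // D2pos //; move: hw; rewrite inE.
move=> /(_ erefl); apply: filterS => w hw hlt.
have := hw hlt; rewrite /= => /eqP; rewrite eqe => /eqP.
rewrite /D2 /Zf /lloss'.
have := @sigmoid_lt R _ _ hlt.
move=> hs.
have -> : (`|psi w| * (2 * sigmoid (k1 (X w)) - (sgn (psi w) + 1)) -
     `|psi w| * (2 * sigmoid (k2 (X w)) - (sgn (psi w) + 1)) =
     (2 * (sigmoid (k1 (X w)) - sigmoid (k2 (X w)))) * `|psi w|)%R by ring.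
move/eqP; rewrite mulf_eq0 => /orP [|].
  by rewrite mulf_eq0 subr_eq0 (gt_eqF hs) orbF pnatr_eq0.
by rewrite normr_eq0 => /eqP.
Qed.

Lemma risk_eq k1 k2 : measurable_fun setT k1 -> measurable_fun setT k2 ->
  (forall B, measurable B -> (\int[P]_(w in X @^-1` B) (Zf k1 w)%:E = 0)%E) ->
  (forall B, measurable B -> (\int[P]_(w in X @^-1` B) (Zf k2 w)%:E = 0)%E) ->
  surrogate_risk P X psi k1 = surrogate_risk P X psi k2.
Proof.
move=> mk1 mk2 F1 F2.
have h12 := @half k1 k2 mk1 mk2 F1 F2.
have h21 := @half k2 k1 mk2 mk1 F2 F1.
apply: (ae_eq_integral (EFin \o Lf k2) (EFin \o Lf k1) measurableT).
- exact/measurable_EFinP/mLf.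
- exact/measurable_EFinP/mLf.
apply: filterS2 h12 h21 => w H1 H2 _ /=.
rewrite /Lf; case: (ltrgtP (k1 (X w)) (k2 (X w))) => h.
- by rewrite H2 // normr0 !mul0r.
- by rewrite H1 // normr0 !mul0r.
- by rewrite h.
Qed.

End Meas.

Theorem theorem2 (dO dX : measure_display) (R : realType)
  (Omega : measurableType dO) (XX : measurableType dX)
  (P : probability Omega R)
  (X : Omega -> XX) (T Y Y1 Ym1 psi : Omega -> R)
  (d : nat) (Theta : set 'rV[R]_d) (g : 'rV[R]_d -> XX -> R)
  (thetastar : 'rV[R]_d) :
  (* the data (X, T, Y) and potential outcomes Y(1), Y(-1) *)
  measurable_fun setT X -> measurable_fun setT T -> measurable_fun setT Y ->
  measurable_fun setT Y1 -> measurable_fun setT Ym1 ->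
  (forall w, T w = 1 \/ T w = -1) ->
  (forall w, Y w = if T w == 1 then Y1 w else Ym1 w) ->
  cond_indep P X Y1 T -> cond_indep P X Ym1 T ->
  (* psi is a score variable depending on the observables *)
  (exists f : XX * R * R -> R,
      measurable_fun setT f /\ forall w, psi w = f (X w, T w, Y w)) ->
  (* Assumption 1 *)
  (exists h1 h2 : XX -> R,
      [/\ is_cond_exp P X psi h1,
          is_cond_exp P X (fun w => Y1 w - Ym1 w) h2 &
          {ae P, forall w, h1 (X w) = h2 (X w)}]) ->
  P.-integrable setT (EFin \o (fun w => `|psi w|)) ->
  (* the policy class *)
  (forall th, Theta th -> measurable_fun setT (g th)) ->
  (* correct specification *)
  (exists th0, Theta th0 /\
     forall h : XX -> R, measurable_fun setT h ->
       (surrogate_risk P X psi (g th0) <= surrogate_risk P X psi h)%E) ->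
  Theta thetastar ->
  ((forall th, Theta th ->
      (surrogate_risk P X psi (g thetastar) <= surrogate_risk P X psi (g th))%E)
   <->
   exists m : XX -> R,
     is_cond_exp P X
       (fun w => `|psi w| * lloss' (g thetastar (X w)) (sgn (psi w))) m /\
     {ae P, forall w, m (X w) = 0}).
Proof.
move=> mX mT mY _ _ _ _ _ _ [f [mf psiE]] _ ipsi mg [th0 [Th0 th0min]] Tstar.
have mpsi : measurable_fun setT psi.
  rewrite (_ : psi = f \o (fun w => (X w, T w, Y w))); last first.
    by apply/funext => w; exact: psiE.
  apply: measurableT_comp => //.
  apply: measurable_fun_pair => //; exact: measurable_fun_pair.
have mgs := mg _ Tstar.
have mg0 := mg _ Th0.
have F0 := @foc _ _ _ _ _ P X psi mX mpsi ipsi _ mg0 th0min.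
split.
- move=> H.
  have Fs : forall B, measurable B ->
      (\int[P]_(w in X @^-1` B) (Zf X psi (g thetastar) w)%:E = 0)%E.
    apply: (@foc _ _ _ _ _ P X psi mX mpsi ipsi _ mgs) => h mh.
    exact: le_trans (H _ Th0) (th0min h mh).
  exists (fun _ => 0); split; last exact: aeW.
  split.
  + exact: measurable_cst.
  + exact: (@iZf _ _ _ _ _ P X psi mX mpsi ipsi _ mgs).
  + exact: integrable0.
  + move=> B mB; rewrite [LHS](Fs B mB).
    by rewrite /= integral0.
- move=> [m [[mm iZ im hB] mae]] th Th.
  have Fs : forall B, measurable B ->
      (\int[P]_(w in X @^-1` B) (Zf X psi (g thetastar) w)%:E = 0)%E.
    move=> B mB; rewrite [LHS](hB B mB).
    rewrite -(integral0 P (X @^-1` B)).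
    apply: (ae_eq_integral (cst 0%E) (EFin \o (m \o X)) (@mpre _ _ _ _ X mX B mB)).
    + apply: (measurable_funS measurableT (@subsetT _ _)).
      apply/measurable_EFinP; exact: measurableT_comp mm mX.
    + exact: measurable_cst.
    + by apply: filterS mae => w /= -> _.
  rewrite (@risk_eq _ _ _ _ _ P X psi mX mpsi ipsi _ _ mgs mg0 Fs F0).
  exact: th0min (mg _ Th).
Qed.
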